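(* Let $p$ be an odd prime and $q\in\mathbb C_p$ with $|1-q|_p<p^{-1/(p-1)}$. For $k,n\in\mathbb Z_+$ with $n\ge k$, $$\int_{\mathbb Z_p}\frac{B_{k,n}(x,q)}{\binom nk}\,d\mu_{-1}(x)=\sum_{m=0}^\infty\sum_{l=0}^{n-k}\binom{l+m-1}{m}\binom{n-k}{l}(-1)^{l+m}q^l(q-1)^mE_{l+m+k,q}.$$
   Context: For $x\in\mathbb Z_p$, $[x]_q=\frac{1-q^x}{1-q}$. The modified $q$-Bernstein polynomials are $B_{k,n}(x,q)=\binom nk[x]_q^k[1-x]_q^{n-k}$ for $0\le k\le n$. The fermionic $p$-adic integral of a uniformly differentiable $f:\mathbb Z_p\to\mathbb C_p$ is $\int_{\mathbb Z_p}f(x)\,d\mu_{-1}(x)=\lim_{N\to\infty}\sum_{x=0}^{p^N-1}f(x)(-1)^x$. The $q$-Euler numbers are $E_{n,q}=\int_{\mathbb Z_p}[x]_q^n\,d\mu_{-1}(x)$. Binomial coefficients $\binom{a}{m}=\frac{a(a-1)\cdots(a-m+1)}{m!}$ are the generalized ones (so $\binom{-1}{0}=1$ and $\binom{m-1}{m}=0$ for $m\ge1$). *)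

(* Defs.v *)
From HB Require Import structures.
From mathcomp Require Import all_boot all_order all_algebra.
From mathcomp Require Import reals exp.
Set Implicit Arguments. Unset Strict Implicit. Unset Printing Implicit Defensive.
Import Order.TTheory GRing.Theory Num.Theory.
Local Open Scope ring_scope.

Section Defs.
Variables (R : realType) (K : fieldType).

(* |.| : K -> R is a non-archimedean absolute value extending |.|_p *)
Definition nonarch_abs (p : nat) (absv : K -> R) : Prop :=
  [/\ forall x, 0 <= absv x,
      forall x, absv x = 0 -> x = 0,
      forall x y, absv (x * y) = absv x * absv y,
      forall x y, absv (x + y) <= Num.max (absv x) (absv y)
    & absv (p%:R) = (p%:R)^-1].

Definition cvg_to (absv : K -> R) (u : nat -> K) (l : K) : Prop :=
  forall eps : R, 0 < eps -> exists N : nat, forall n, (N <= n)%N -> absv (u n - l) < eps.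

Definition cauchy_seq (absv : K -> R) (u : nat -> K) : Prop :=
  forall eps : R, 0 < eps -> exists N : nat,
    forall m n, (N <= m)%N -> (N <= n)%N -> absv (u m - u n) < eps.

Definition complete_abs (absv : K -> R) : Prop :=
  forall u, cauchy_seq absv u -> exists l, cvg_to absv u l.

(* [x]_q for integer x; at q = 1 the (limiting) convention [x]_1 = x *)
Definition qnum (q : K) (x : int) : K :=
  if q == 1 then x%:~R else (1 - q ^ x) / (1 - q).

Definition qBernstein (q : K) (k n : nat) (x : nat) : K :=
  ('C(n, k))%:R * qnum q x ^+ k * qnum q (1 - x%:Z) ^+ (n - k).

(* Riemann-type sums of the fermionic p-adic integral *)
Definition ferm_sum (p : nat) (f : nat -> K) (N : nat) : K :=
  \sum_(x < p ^ N) f x * (-1) ^+ x.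

Definition is_ferm_integral (absv : K -> R) (p : nat) (f : nat -> K) (I : K) : Prop :=
  cvg_to absv (ferm_sum p f) I.

Definition gbinom (a : int) (m : nat) : K :=
  ratr ((\prod_(i < m) (a%:~R - (i : nat)%:R : rat)) / (m`!)%:R).

End Defs.

(* Main.v *)
Require Import Defs.
From HB Require Import structures.
From mathcomp Require Import all_boot all_order all_algebra.
From mathcomp Require Import reals exp.
From mathcomp Require Import ring lra zify.
From Stdlib Require Import ClassicalEpsilon.
Import Order.TTheory GRing.Theory Num.Theory.
Set Implicit Arguments. Unset Strict Implicit. Unset Printing Implicit Defensive.
Local Open Scope ring_scope.

Definition qn (K : fieldType) (q : K) (x : nat) : K := \sum_(i < x) q ^+ i.

Definition bc (l m : nat) : nat := if l is l'.+1 then 'C(l' + m, m) else (m == 0)%N.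

Lemma gbinomE (K : fieldType) l m : gbinom K (l%:Z + m%:Z - 1) m = (bc l m)%:R.
Proof.
rewrite /gbinom; case: l => [|l] /=.
  case: m => [|m]; first by rewrite big_ord0 fact0 /= divr1; exact: (ratr_nat K 1).
  rewrite big_ord_recr /=.
  have -> : ((0%:Z + m.+1%:Z - 1)%:~R - m%:R : rat) = 0.
    have -> : (0%:Z + m.+1%:Z - 1) = m%:Z by lia.
    by rewrite subrr.
  by rewrite mulr0 mul0r; exact: (ratr_nat K 0).
have -> : (l.+1%:Z + m%:Z - 1) = (l + m)%N%:Z by lia.
have -> : \prod_(i < m) (((l + m)%N%:Z)%:~R - (i : nat)%:R : rat) = ((l + m) ^_ m)%:R.
  rewrite ffact_prod natr_prod; apply: eq_bigr => i _.
  rewrite natrB //; apply: leq_trans (ltnW (ltn_ord i)) _; exact: leq_addl.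
rewrite -bin_ffact natrM mulfK ?ratr_nat //.
by rewrite pnatr_eq0 -lt0n fact_gt0.
Qed.

Section Main.
Variables (R : realType) (K : fieldType) (absv : K -> R) (p : nat).
Hypothesis pp : prime p.
Hypothesis ha : nonarch_abs p absv.

Lemma abs_ge0 x : 0 <= absv x. Proof. by case: ha => h _ _ _ _; apply: h. Qed.
Lemma abs_eq0 x : absv x = 0 -> x = 0. Proof. by case: ha => _ h _ _ _; apply: h. Qed.
Lemma absM x y : absv (x * y) = absv x * absv y. Proof. by case: ha => _ _ h _ _; apply: h. Qed.
Lemma absD x y : absv (x + y) <= Num.max (absv x) (absv y). Proof. by case: ha => _ _ _ h _; apply: h. Qed.
Lemma abs_p : absv (p%:R) = (p%:R)^-1. Proof. by case: ha. Qed.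

Lemma p_gt1 : (1 < p)%N. Proof. exact: prime_gt1. Qed.

Lemma pinv_lt1 : (p%:R : R)^-1 < 1.
Proof. rewrite invf_lt1 ?ltr0n ?ltr1n ?prime_gt0 //; exact: prime_gt1. Qed.
Lemma pinv_ge0 : 0 <= (p%:R : R)^-1.
Proof. by rewrite invr_ge0 ler0n. Qed.

Lemma abs1 : absv 1 = 1.
Proof.
have h := absM 1 1; rewrite mulr1 in h.
have hn : absv 1 != 0 by apply/eqP => /abs_eq0 /eqP; rewrite oner_eq0.
by apply: (mulfI hn); rewrite mulr1 -h.
Qed.

Lemma abs0 : absv 0 = 0.
Proof.
have h := absM 0 (p%:R); rewrite mul0r abs_p in h.
have : absv 0 * (1 - (p%:R)^-1) = 0 by rewrite mulrBr mulr1 -h subrr.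
move/eqP; rewrite mulf_eq0 => /orP [/eqP //|].
by rewrite subr_eq0 => /eqP h1; move: pinv_lt1; rewrite -h1 ltxx.
Qed.

Lemma absN1 : absv (-1) = 1.
Proof.
have h := absM (-1) (-1); rewrite mulrNN mulr1 abs1 in h.
have h0 := abs_ge0 (-1).
have : (absv (-1) - 1) * (absv (-1) + 1) = 0 by rewrite -subr_sqr expr1n expr2 -h subrr.
move/eqP; rewrite mulf_eq0 => /orP [|]; first by rewrite subr_eq0 => /eqP.
move/eqP => h2; lra.
Qed.

Lemma absN x : absv (- x) = absv x.
Proof. by rewrite -mulN1r absM absN1 mul1r. Qed.

Lemma absB x y : absv (x - y) = absv (y - x).
Proof. by rewrite -absN opprB. Qed.

Lemma absD_le x y c : absv x <= c -> absv y <= c -> absv (x + y) <= c.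
Proof. move=> hx hy; apply: le_trans (absD x y) _; by rewrite ge_max hx hy. Qed.

Lemma absX x n : absv (x ^+ n) = absv x ^+ n.
Proof. elim: n => [|n ih]; first by rewrite !expr0 abs1. by rewrite !exprS absM ih. Qed.

Lemma abs_sum (I : Type) (r : seq I) (P : pred I) (F : I -> K) c :
  0 <= c -> (forall i, P i -> absv (F i) <= c) -> absv (\sum_(i <- r | P i) F i) <= c.
Proof.
move=> c0 hF; apply: (big_ind (fun x => absv x <= c)).
- by rewrite abs0.
- by move=> x y; apply: absD_le.
- exact: hF.
Qed.

Lemma abs_nat n : absv (n%:R) <= 1.
Proof.
elim: n => [|n ih]; first by rewrite abs0.
by rewrite -addn1 natrD; apply: absD_le => //; rewrite abs1.
Qed.

Lemma absV x : absv (x^-1) = (absv x)^-1.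
Proof.
have [->|x0] := eqVneq x 0; first by rewrite invr0 abs0 invr0.
have hx : absv x != 0 by apply/eqP => /abs_eq0 /eqP; rewrite (negPf x0).
by apply: (mulfI hx); rewrite -absM !mulfV // abs1.
Qed.

Lemma abs_sign n : absv ((-1) ^+ n) = 1.
Proof. by rewrite absX absN1 expr1n. Qed.

Lemma natr_neq0 m : (0 < m)%N -> (m%:R : K) != 0.
Proof.
move=> m0; have [r cpr ->] := pfactor_coprime pp m0.
rewrite natrM mulf_eq0 negb_or; apply/andP; split; last first.
  rewrite natrX expf_eq0 negb_and; apply/orP; right.
  apply/eqP => h; move: (abs_p); rewrite h abs0 => /eqP; rewrite eq_sym invr_eq0 pnatr_eq0.
  by move/eqP => p0; move: (prime_gt0 pp); rewrite p0.
have [a _ ha'] := Bezoutl r (prime_gt0 pp).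
move: cpr; rewrite /coprime => /eqP g1; rewrite g1 in ha'.
case/dvdnP: ha' => c hc.
apply/eqP => r0.
have : ((1 + a * r)%:R : K) = (c * p)%:R by rewrite hc.
rewrite natrD natrM r0 mulr0 addr0 natrM mulr1n => h1.
have : absv (1 : K) <= (p%:R)^-1.
  by rewrite h1 absM abs_p -[X in _ <= X]mul1r ler_wpM2r ?pinv_ge0 ?abs_nat.
by rewrite abs1 leNgt pinv_lt1.
Qed.


Lemma qn_le1 (q : K) x : absv q <= 1 -> absv (qn q x) <= 1.
Proof.
move=> hq; apply: abs_sum => // i _; rewrite absX.
by apply: exprn_ile1 => //; apply: abs_ge0 _.
Qed.

Lemma qn_sub1 (q : K) x : 1 - q ^+ x = (1 - q) * qn q x.
Proof. by rewrite /qn -[LHS]opprB subrX1 -mulNr opprB. Qed.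

Lemma qnD (q : K) a b : qn q (a + b) = qn q a + q ^+ a * qn q b.
Proof.
rewrite /qn big_split_ord /=; congr (_ + _); rewrite mulr_sumr.
by apply: eq_bigr => i _; rewrite exprD.
Qed.

Lemma qnM (q : K) a b : qn q (a * b) = qn q a * qn (q ^+ a) b.
Proof.
elim: b => [|b ih]; first by rewrite muln0 /qn !big_ord0 mulr0.
rewrite mulnS addnC qnD ih /qn [in RHS]big_ord_recr /= mulrDr -exprM.
by congr (_ + _); rewrite mulrC.
Qed.

Lemma abs_1mX (q : K) a : absv q <= 1 -> absv (1 - q ^+ a) <= absv (1 - q).
Proof.
move=> hq; rewrite qn_sub1 absM -[X in _ <= X]mulr1.
by rewrite ler_wpM2l ?abs_ge0 // qn_le1.
Qed.

Lemma qn_p (q : K) : absv (1 - q) ^+ p.-1 <= (p%:R)^-1 -> absv (qn q p) <= (p%:R)^-1.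
Proof.
move=> hq.
have p1 : (0 < p.-1)%N by have := prime_gt1 pp; case: p => [|[|]].
have s1 : absv (q - 1) <= 1.
  rewrite absB; rewrite -(expr_le1 p1) ?abs_ge0 //.
  by apply: le_trans hq _; apply/ltW/pinv_lt1.
have [->|s0] := eqVneq q 1.
  rewrite /qn; under eq_bigr do rewrite expr1n.
  by rewrite sumr_const card_ord abs_p.
set s := q - 1.
have hq' : q = s + 1 by rewrite /s subrK.
have key : qn q p = \sum_(i < p) s ^+ i *+ 'C(p, i.+1).
  have sn0 : s != 0 by rewrite /s subr_eq0.
  apply: (mulfI sn0).
  rewrite /qn -subrX1 -/s {1}hq' exprD1n big_ord_recl /= expr0 bin0 mulr1n.
  rewrite addrC addKr mulr_sumr; apply: eq_bigr => i _.
  by rewrite /bump leq0n add1n mulrnAr -exprS.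
rewrite key; apply: abs_sum => //; first exact: pinv_ge0.
move=> i _.
have [ilt|ige] := ltnP i.+1 p.
  have /dvdnP [c hc] : (p %| 'C(p, i.+1))%N by apply: prime_dvd_bin.
  rewrite hc -mulr_natr absM natrM absM abs_p.
  rewrite -[X in _ <= X]mul1r ler_pM ?abs_ge0 ?mulr_ge0 ?abs_ge0 ?pinv_ge0 //.
    by rewrite absX exprn_ile1 ?abs_ge0.
  by rewrite -[X in _ <= X]mul1r ler_wpM2r ?pinv_ge0 ?abs_nat.
have ip : i.+1 = p by apply/eqP; rewrite eqn_leq ige ltn_ord.
rewrite ip binn mulr1n absX /s absB.
by have ip2 := congr1 predn ip; rewrite /= in ip2; rewrite ip2.
Qed.

Variable q : K.
Hypothesis ht : absv (1 - q) ^+ p.-1 < (p%:R)^-1.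

Lemma p1_gt0 : (0 < p.-1)%N.
Proof. by have := prime_gt1 pp; case: p => [|[|]]. Qed.

Lemma t_lt1 : absv (1 - q) < 1.
Proof.
rewrite -(expr_lt1 p1_gt0) ?abs_ge0 //.
by apply: lt_trans ht _; apply: pinv_lt1.
Qed.

Lemma absq : absv q = 1.
Proof.
have t1 := t_lt1.
apply/eqP; rewrite eq_le; apply/andP; split.
  have -> : q = 1 + - (1 - q) by rewrite opprB addrC subrK.
  apply: absD_le; first by rewrite abs1.
  by rewrite absN ltW.
rewrite leNgt; apply/negP => hq.
have := absD q (1 - q); rewrite addrC subrK abs1 le_max => /orP [h1|h1].
  by move: (lt_le_trans hq h1); rewrite ltxx.
by move: (lt_le_trans t1 h1); rewrite ltxx.
Qed.

Lemma qn_pN N : absv (qn q (p ^ N)) <= (p%:R)^-1 ^+ N.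
Proof.
elim: N => [|N ih]; first by rewrite expn0 expr0 /qn big_ord1 expr0 abs1.
rewrite expnSr qnM absM exprSr ler_pM ?abs_ge0 //.
apply: qn_p; apply: le_trans (ltW ht).
apply: lerXn2r; rewrite ?nnegrE ?abs_ge0 //.
by apply: abs_1mX; rewrite absq.
Qed.

Lemma qn_mod N x y : absv (qn q (x + p ^ N * y) - qn q x) <= (p%:R)^-1 ^+ N.
Proof.
rewrite qnD addrC addKr qnM !absM absX absq expr1n mul1r.
rewrite -[X in _ <= X]mulr1 ler_pM ?abs_ge0 ?qn_pN //.
by apply: qn_le1; rewrite absX absq expr1n.
Qed.



Hypothesis po : odd p.

Lemma alt_sum n : \sum_(j < n) (-1) ^+ j = (odd n)%:R :> K.
Proof.
elim: n => [|n ih]; first by rewrite big_ord0.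
rewrite big_ord_recr /= ih -signr_odd; case: (odd n) => /=.
  by rewrite expr1 subrr.
by rewrite expr0 add0r.
Qed.

Lemma sum_split (F : nat -> K) a b :
  \sum_(x < a * b) F x = \sum_(j < b) \sum_(i < a) F (i + a * j)%N.
Proof.
elim: b => [|b ih]; first by rewrite muln0 !big_ord0.
rewrite mulnS addnC big_split_ord /= ih big_ord_recr /=; congr (_ + _).
by apply: eq_bigr => i _; rewrite addnC.
Qed.

Definition rho : R := (p%:R)^-1.

Definition fmod (f : nat -> K) :=
  forall N x y, absv (f (x + p ^ N * y)%N - f x) <= rho ^+ N.

Lemma rho_ge0 : 0 <= rho. Proof. exact: pinv_ge0. Qed.
Lemma rho_lt1 : rho < 1. Proof. exact: pinv_lt1. Qed.

Lemma sign_split N i j :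
  (-1) ^+ (i + p ^ N * j)%N = ((-1) ^+ i * (-1) ^+ j : K).
Proof.
rewrite exprD exprM; congr (_ * ((_ : K) ^+ _)).
by rewrite -signr_odd oddX po orbT expr1.
Qed.

Lemma ferm_step (f : nat -> K) N : fmod f ->
  absv (ferm_sum p f N.+1 - ferm_sum p f N) <= rho ^+ N.
Proof.
move=> hf.
have e1 : ferm_sum p f N.+1 =
    \sum_(j < p) \sum_(i < p ^ N) f (i + p ^ N * j)%N * ((-1) ^+ i * (-1) ^+ j).
  rewrite /ferm_sum expnSr (sum_split (fun x => f x * (-1) ^+ x)); apply: eq_bigr => j _.
  by apply: eq_bigr => i _; rewrite sign_split.
have e2 : ferm_sum p f N =
    \sum_(j < p) \sum_(i < p ^ N) f i * ((-1) ^+ i * (-1) ^+ j).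
  have a1 : \sum_(j < p) (-1) ^+ j = 1 :> K by rewrite alt_sum po.
  rewrite /ferm_sum -[LHS]mul1r -{1}a1 mulr_suml.
  apply: eq_bigr => j _; rewrite mulr_sumr; apply: eq_bigr => i _.
  by rewrite mulrC -mulrA.
rewrite e1 e2 -sumrB; apply: abs_sum; first by apply: exprn_ge0 rho_ge0.
move=> j _; rewrite -sumrB; apply: abs_sum; first by apply: exprn_ge0 rho_ge0.
move=> i _; rewrite -mulrBl absM absM !abs_sign !mulr1; exact: hf.
Qed.

Lemma ferm_cauchy (f : nat -> K) N m : fmod f -> (N <= m)%N ->
  absv (ferm_sum p f m - ferm_sum p f N) <= rho ^+ N.
Proof.
move=> hf /subnK <-; elim: (m - N)%N => [|d ih]; first by rewrite add0n subrr abs0 exprn_ge0 ?rho_ge0.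
rewrite addSn -(subrK (ferm_sum p f (d + N)) (ferm_sum p f (d + N).+1)) -addrA.
apply: absD_le => //; apply: le_trans (ferm_step _ hf) _.
by rewrite ler_wiXn2l ?rho_ge0 ?ltW ?rho_lt1 ?leq_addl.
Qed.

Lemma pow_small (r eps : R) : 0 <= r -> r < 1 -> 0 < eps -> exists N, r ^+ N < eps.
Proof.
move=> r0 r1 e0.
have [->|rn0] := eqVneq r 0; first by exists 1%N; rewrite expr1.
have rp : 0 < r by rewrite lt_def rn0 r0.
set d := r^-1 - 1.
have dp : 0 < d by rewrite /d subr_gt0 invf_gt1.
have bern : forall n, 1 + n%:R * d <= (1 + d) ^+ n.
  elim=> [|n ih]; first by rewrite mul0r addr0 expr0.
  rewrite exprS -natr1 mulrDl mul1r.
  have h0 : 0 <= n%:R * d by rewrite mulr_ge0 ?ler0n ?ltW.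
  nra.
have hrd : r * (1 + d) = 1 by rewrite /d addrC subrK mulfV.
set N := Num.Def.archi_bound ((d * eps)^-1).
have hN : (d * eps)^-1 < N%:R by apply: archi_boundP; rewrite invr_ge0 mulr_ge0 ?ltW.
exists N.
have h1 : r ^+ N * (1 + d) ^+ N = 1 by rewrite -exprMn hrd expr1n.
have h2 := bern N.
have h3 : 1 < N%:R * (d * eps).
  by rewrite -ltr_pdivrMr ?mulr_gt0 // div1r.
have h4 : 0 < r ^+ N by apply: exprn_gt0.
have h5 : 0 < N%:R * d by rewrite mulr_gt0 //; apply: le_lt_trans hN; rewrite invr_ge0 mulr_ge0 ?ltW.
nra.
Qed.

Lemma ferm_exists (f : nat -> K) : complete_abs absv -> fmod f -> exists I, is_ferm_integral absv p f I.
Proof.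
move=> hc hf; apply: hc => eps e0.
have [N hN] := pow_small rho_ge0 rho_lt1 e0.
exists N => m n hm hn.
rewrite -(subrK (ferm_sum p f N) (ferm_sum p f m)) -addrA.
have hb : rho ^+ N <= eps by apply: ltW.
apply: le_lt_trans (absD _ _) _; rewrite gt_max; apply/andP; split.
  by apply: le_lt_trans (ferm_cauchy hf hm) hN.
by rewrite -opprB absN; apply: le_lt_trans (ferm_cauchy hf hn) hN.
Qed.

Lemma cvg_add (u v : nat -> K) (a b : K) : cvg_to absv u a -> cvg_to absv v b ->
  cvg_to absv (fun n => u n + v n) (a + b).
Proof.
move=> hu hv eps e0; have [N1 h1] := hu eps e0; have [N2 h2] := hv eps e0.
exists (maxn N1 N2) => n hn.
have -> : u n + v n - (a + b) = (u n - a) + (v n - b) by rewrite opprD addrACA.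
apply: le_lt_trans (absD _ _) _; rewrite gt_max h1 ?h2 //.
  by apply: leq_trans hn; rewrite leq_maxr.
by apply: leq_trans hn; rewrite leq_maxl.
Qed.

Lemma cvg_scale (c : K) (u : nat -> K) (a : K) : cvg_to absv u a -> cvg_to absv (fun n => c * u n) (c * a).
Proof.
move=> hu eps e0.
have [->|c0] := eqVneq c 0.
  by exists 0%N => n _; rewrite !mul0r subrr abs0.
have ac : 0 < absv c.
  rewrite lt_def abs_ge0 andbT; apply/eqP => /abs_eq0 /eqP; by rewrite (negPf c0).
have [N hN] := hu (eps / absv c) (divr_gt0 e0 ac).
exists N => n hn; rewrite -mulrBr absM -ltr_pdivlMl // mulrC; exact: hN.
Qed.

Lemma ferm_sum_ext (f g : nat -> K) N : (forall x, f x = g x) -> ferm_sum p f N = ferm_sum p g N.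
Proof. by move=> h; apply: eq_bigr => i _; rewrite h. Qed.

Lemma int_ext (f g : nat -> K) (a : K) : is_ferm_integral absv p f a -> (forall x, f x = g x) ->
  is_ferm_integral absv p g a.
Proof.
move=> hf h eps e0; have [N hN] := hf eps e0; exists N => n hn.
by rewrite -(ferm_sum_ext _ h); apply: hN.
Qed.

Lemma int_add (f g : nat -> K) (a b : K) : is_ferm_integral absv p f a -> is_ferm_integral absv p g b ->
  is_ferm_integral absv p (fun x => f x + g x) (a + b).
Proof.
move=> hf hg; have := cvg_add hf hg => h eps e0; have [N hN] := h eps e0.
exists N => n hn; rewrite /ferm_sum.
have -> : \sum_(x < p ^ n) (f x + g x) * (-1) ^+ x = ferm_sum p f n + ferm_sum p g n.
  by rewrite /ferm_sum -big_split /=; apply: eq_bigr => i _; rewrite mulrDl.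
exact: hN.
Qed.

Lemma int_scale (c : K) (f : nat -> K) (a : K) : is_ferm_integral absv p f a ->
  is_ferm_integral absv p (fun x => c * f x) (c * a).
Proof.
move=> hf; have := cvg_scale c hf => h eps e0; have [N hN] := h eps e0.
exists N => n hn; rewrite /ferm_sum.
have -> : \sum_(x < p ^ n) (c * f x) * (-1) ^+ x = c * ferm_sum p f n.
  by rewrite /ferm_sum mulr_sumr; apply: eq_bigr => i _; rewrite mulrA.
exact: hN.
Qed.

Lemma int_sub (f g : nat -> K) (a b : K) : is_ferm_integral absv p f a -> is_ferm_integral absv p g b ->
  is_ferm_integral absv p (fun x => f x - g x) (a - b).
Proof.
move=> hf hg; have h := int_add hf (int_scale (-1) hg).
rewrite mulN1r in h; apply: (int_ext h) => x; by rewrite mulN1r.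
Qed.

Lemma int_zero : is_ferm_integral absv p (fun _ => 0) 0.
Proof.
move=> eps e0; exists 0%N => n _.
rewrite /ferm_sum big1 ?subrr ?abs0 // => i _; by rewrite mul0r.
Qed.

Lemma int_sum (F : nat -> nat -> K) (G : nat -> K) M :
  (forall i, is_ferm_integral absv p (F i) (G i)) ->
  is_ferm_integral absv p (fun x => \sum_(i < M) F i x) (\sum_(i < M) G i).
Proof.
move=> hF; elim: M => [|M ih].
  rewrite big_ord0; apply: int_ext int_zero _ => x; by rewrite big_ord0.
rewrite big_ord_recr /=; apply: int_ext (int_add ih (hF M)) _ => x.
by rewrite big_ord_recr.
Qed.

Lemma int_bound (f : nat -> K) (a : K) (c : R) : is_ferm_integral absv p f a -> 0 <= c ->
  (forall x, absv (f x) <= c) -> absv a <= c.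
Proof.
move=> hf c0 hb; rewrite leNgt; apply/negP => hc.
have a0 : 0 < absv a by apply: le_lt_trans hc.
have [N hN] := hf (absv a) a0.
have h1 := hN N (leqnn N).
have h2 : absv (ferm_sum p f N) <= c.
  apply: abs_sum => // i _; rewrite absM abs_sign mulr1; exact: hb.
have := absD (a - ferm_sum p f N) (ferm_sum p f N); rewrite subrK.
rewrite le_max => /orP [h|h].
  have h1' : absv (a - ferm_sum p f N) < absv a by rewrite absB.
  by move: (le_lt_trans h h1'); rewrite ltxx.
by move: (le_lt_trans h (le_lt_trans h2 hc)); rewrite ltxx.
Qed.

Definition bnd (f : nat -> K) := forall x, absv (f x) <= 1.

Lemma rhoN_ge0 N : 0 <= rho ^+ N. Proof. exact: exprn_ge0 rho_ge0. Qed.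

Lemma fmod_const (c : K) : fmod (fun _ => c).
Proof. by move=> N x y; rewrite subrr abs0 rhoN_ge0. Qed.

Lemma fmod_mul (f g : nat -> K) : bnd f -> bnd g -> fmod f -> fmod g -> fmod (fun x => f x * g x).
Proof.
move=> bf bg mf mg N x y.
set x' := (x + p ^ N * y)%N.
have -> : f x' * g x' - f x * g x = f x' * (g x' - g x) + (f x' - f x) * g x.
  by rewrite mulrBr mulrBl addrA subrK.
apply: absD_le; rewrite absM.
  by rewrite -[X in _ <= X]mul1r ler_pM ?abs_ge0 //; apply: mg.
by rewrite -[X in _ <= X]mulr1 ler_pM ?abs_ge0 //; apply: mf.
Qed.

Lemma bnd_mul (f g : nat -> K) : bnd f -> bnd g -> bnd (fun x => f x * g x).
Proof. by move=> bf bg x; rewrite absM -[X in _ <= X]mulr1 ler_pM ?abs_ge0. Qed.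

Lemma bnd_exp (f : nat -> K) j : bnd f -> bnd (fun x => f x ^+ j).
Proof. by move=> bf x; rewrite absX exprn_ile1 ?abs_ge0. Qed.

Lemma fmod_exp (f : nat -> K) j : bnd f -> fmod f -> fmod (fun x => f x ^+ j).
Proof.
move=> bf mf; elim: j => [|j ih].
  by apply: (@fmod_const 1) .
move=> N x y; rewrite !exprS.
by apply: (fmod_mul bf (bnd_exp j bf) mf ih).
Qed.

Lemma fmod_sub (f g : nat -> K) : fmod f -> fmod g -> fmod (fun x => f x - g x).
Proof.
move=> mf mg N x y.
set x' := (x + p ^ N * y)%N.
have -> : f x' - g x' - (f x - g x) = (f x' - f x) + - (g x' - g x) by ring.
by apply: absD_le; rewrite ?absN; [apply: mf | apply: mg].
Qed.

Lemma fmod_scale (c : K) (f : nat -> K) : absv c <= 1 -> fmod f -> fmod (fun x => c * f x).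
Proof.
move=> hc mf N x y; rewrite -mulrBr absM -[X in _ <= X]mul1r ler_pM ?abs_ge0 //.
Qed.

Definition Asum (l M : nat) (z : K) : K := \sum_(m < M) (bc l m)%:R * z ^+ m.

Lemma bc0 l : bc l 0 = 1%N.
Proof. by case: l => [|l] //=; rewrite bin0. Qed.

Lemma bc_pascal l M : bc l.+1 M.+1 = (bc l.+1 M + bc l M.+1)%N.
Proof.
rewrite /= addnS binS addnC; congr (_ + _)%N.
case: l => [|l] /=; first by rewrite add0n bin_small.
by rewrite addSn addnS.
Qed.

Lemma AsumS l M z : Asum l M.+1 z = Asum l M z + (bc l M)%:R * z ^+ M.
Proof. by rewrite /Asum big_ord_recr. Qed.

Lemma Asum1 l z : Asum l 1 z = 1.
Proof. by rewrite /Asum big_ord1 bc0 expr0 mulr1. Qed.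

Lemma Asum_step l M z :
  (1 - z) * Asum l.+1 M.+1 z = Asum l M.+1 z - (bc l.+1 M)%:R * z ^+ M.+1.
Proof.
elim: M => [|M ih].
  by rewrite !Asum1 bc0 mulr1 expr1 mul1r.
rewrite AsumS [in RHS]AsumS mulrDr ih bc_pascal natrD (exprS z M.+1).
move: (Asum l M.+1 z) (z ^+ M.+1) (bc l.+1 M)%:R (bc l M.+1)%:R => a b c d.
ring.
Qed.

Lemma abs_1mz z : absv z <= 1 -> absv (1 - z) <= 1.
Proof. by move=> hz; apply: absD_le; rewrite ?abs1 ?absN. Qed.

Lemma Asum_rem l M z : absv z <= 1 ->
  exists B, absv B <= 1 /\ (1 - z) ^+ l * Asum l M z = 1 - z ^+ M * B.
Proof.
move=> hz; case: M => [|M].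
  by exists 1; rewrite abs1 /Asum big_ord0 mulr0 expr0 mulr1 subrr.
elim: l => [|l [B [hB e]]].
  exists 0; rewrite abs0 mulr0 subr0 expr0 mul1r; split => //.
  rewrite /Asum big_ord_recl /= expr0 mulr1 big1 ?addr0 // => i _.
  by rewrite /bump /= mul0r.
exists (B + (bc l.+1 M)%:R * (1 - z) ^+ l); split.
  apply: absD_le => //; rewrite absM absX -[X in _ <= X]mulr1.
  by rewrite ler_pM ?abs_ge0 ?exprn_ge0 ?abs_ge0 ?abs_nat ?exprn_ile1 ?abs_ge0 ?abs_1mz.
rewrite exprSr -mulrA Asum_step mulrBr e.
move: ((1 - z) ^+ l) (z ^+ M.+1) (bc l.+1 M)%:R => a b c.
ring.
Qed.

Lemma q0 : q != 0.
Proof. by apply/eqP => h; move: absq; rewrite h abs0 => /eqP; rewrite eq_sym oner_eq0. Qed.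

Definition U (x : nat) : K := (q ^+ x)^-1.
Definition vv (x : nat) : K := 1 - q * (qn q x * U x).

Lemma absU x : absv (U x) = 1.
Proof. by rewrite /U absV absX absq expr1n invr1. Qed.

Lemma qnumE (x : nat) : qnum q x%:Z = qn q x.
Proof.
rewrite /qnum; case: eqP => [->|/eqP hq].
  by rewrite /qn; under eq_bigr do rewrite expr1n; rewrite sumr_const card_ord.
have hq' : 1 - q != 0 by rewrite subr_eq0 eq_sym.
by rewrite -exprnP qn_sub1 mulrC mulKf.
Qed.

Lemma qnum1mE (x : nat) : qnum q (1 - x%:Z) = vv x.
Proof.
rewrite /qnum /vv /U; case: eqP => [->|/eqP hq].
  rewrite expr1n invr1 mulr1 mul1r /qn; under eq_bigr do rewrite expr1n.
  by rewrite sumr_const card_ord intrB.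
have hq' : 1 - q != 0 by rewrite subr_eq0 eq_sym.
have hX : q ^+ x != 0 by rewrite expf_neq0 // q0.
rewrite expfzDr ?q0 // expr1z -exprnN.
have -> : qn q x = (1 - q ^+ x) / (1 - q) by rewrite qn_sub1 [_ * qn q x]mulrC mulfK.
move: (q ^+ x) hX => X hX.
field; by rewrite hq' hX.
Qed.

Lemma bnd_qn : bnd (qn q).
Proof. by move=> x; apply: qn_le1; rewrite absq. Qed.

Lemma fmod_qn : fmod (qn q).
Proof. by move=> N x y; apply: qn_mod. Qed.

Lemma bnd_U : bnd U.
Proof. by move=> x; rewrite absU. Qed.

Lemma fmod_U : fmod U.
Proof.
move=> N x y; rewrite /U exprD invfM -[X in _ * _ - X]mulr1 -mulrBr absM absV absX absq.
rewrite expr1n invr1 mul1r.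
have hX : q ^+ (p ^ N * y) != 0 by rewrite expf_neq0 // q0.
rewrite -[X in _ - X](mulVf hX) -[X in X - _]mulr1 -mulrBr absM absV absX absq expr1n invr1 mul1r.
rewrite qn_sub1 absM -[X in _ <= X]mul1r; apply: ler_pM; rewrite ?abs_ge0 //.
  exact: ltW t_lt1.
by have := qn_mod N 0 y; rewrite add0n /qn big_ord0 subr0.
Qed.

Lemma bnd_vv : bnd vv.
Proof.
move=> x; apply: absD_le; first by rewrite abs1.
by rewrite absN absM absq mul1r; apply: (bnd_mul bnd_qn bnd_U).
Qed.

Lemma fmod_vv : fmod vv.
Proof.
apply: fmod_sub; first exact: fmod_const.
apply: fmod_scale; first by rewrite absq.
exact: fmod_mul bnd_qn bnd_U fmod_qn fmod_U.
Qed.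

Definition coef (L l m : nat) : K :=
  gbinom K (l%:Z + m%:Z - 1) m * ('C(L, l))%:R * (-1) ^+ (l + m) * q ^+ l * (q - 1) ^+ m.

Definition gM (k L M x : nat) : K :=
  \sum_(m < M) \sum_(l < L.+1) coef L l m * qn q x ^+ (l + m + k).

Definition hf (k L x : nat) : K := qn q x ^+ k * vv x ^+ L.

Lemma le_mul1 (a b c : R) : 0 <= a -> a <= 1 -> 0 <= b -> b <= c -> a * b <= c.
Proof. move=> a0 a1 b0 bc; apply: le_trans bc; rewrite -[X in _ <= X]mul1r ler_wpM2r //. Qed.

Lemma pointwise k L M x : absv (hf k L x - gM k L M x) <= absv (1 - q) ^+ M.
Proof.
rewrite /hf /gM /vv.
have hu0 : 1 - (1 - q) * qn q x = q ^+ x by rewrite -qn_sub1 opprB addrC subrK.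
have hw : absv (qn q x) <= 1 by apply: bnd_qn.
move: (qn q x) hu0 hw => w hu hw.
set z := (1 - q) * w.
have hz : absv z <= absv (1 - q) by rewrite /z absM -[X in _ <= X]mulr1 ler_wpM2l ?abs_ge0.
have hz1 : absv z <= 1 by apply: le_trans hz (ltW t_lt1).
have eg : \sum_(m < M) \sum_(l < L.+1) coef L l m * w ^+ (l + m + k)
    = w ^+ k * \sum_(l < L.+1) ('C(L, l))%:R * (- q * w) ^+ l * Asum l M z.
  rewrite exchange_big /= mulr_sumr; apply: eq_bigr => l _.
  rewrite /Asum mulr_sumr mulr_sumr; apply: eq_bigr => m _.
  rewrite /coef gbinomE.
  have e1 : (- q * w) ^+ l = (-1) ^+ l * q ^+ l * w ^+ l by rewrite -!exprMn mulN1r.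
  have e2 : z ^+ m = (-1) ^+ m * (q - 1) ^+ m * w ^+ m by rewrite /z -!exprMn mulN1r opprB.
  rewrite e1 e2 !exprD.
  move: ((-1 : K) ^+ l) ((-1 : K) ^+ m) (q ^+ l) ((q - 1) ^+ m) (w ^+ l) (w ^+ m) (w ^+ k).
  move: (bc l m)%:R ('C(L, l))%:R => a b c d e f g h i; ring.
have eh : w ^+ k * (1 - q * (w * U x)) ^+ L
    = w ^+ k * \sum_(l < L.+1) ('C(L, l))%:R * (- q * w) ^+ l * U x ^+ l.
  congr (_ * _).
  have -> : 1 - q * (w * U x) = (- q * w * U x) + 1 by ring.
  rewrite exprD1n; apply: eq_bigr => l _; rewrite mulr_natl exprMn.
  by rewrite mulrnAl.
rewrite eg eh -mulrBr -sumrB absM absX; apply: le_mul1; rewrite ?exprn_ge0 ?abs_ge0 ?exprn_ile1 ?abs_ge0 //.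
apply: abs_sum; first by rewrite exprn_ge0 ?abs_ge0.
move=> l _; have [B [hB eB]] := Asum_rem l M hz1.
rewrite -mulrBr.
have -> : U x ^+ l - Asum l M z = U x ^+ l * (z ^+ M * B).
  have e3 : z ^+ M * B = 1 - (1 - z) ^+ l * Asum l M z by rewrite eB opprB addrC subrK.
  rewrite e3 /z hu mulrBr mulr1 mulrA -exprMn /U mulVf ?expf_neq0 ?q0 // expr1n mul1r.
  by [].
have h1 : absv ('C(L, l))%:R <= 1 by apply: abs_nat.
have h2 : absv ((- q * w) ^+ l) <= 1.
  by rewrite absX exprn_ile1 ?abs_ge0 // absM absN absq mul1r.
have h3 : absv (U x ^+ l) = 1 by rewrite absX absU expr1n.
have h4 : absv (z ^+ M) <= absv (1 - q) ^+ M.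
  by rewrite absX; apply: lerXn2r; rewrite ?nnegrE ?abs_ge0.
rewrite !absM h3 mul1r.
have g1 := abs_ge0 ('C(L, l))%:R; have g2 := abs_ge0 ((- q * w) ^+ l).
have g3 := abs_ge0 (z ^+ M); have g4 := abs_ge0 B.
rewrite -mulrA; apply: le_mul1 => //; first by rewrite !mulr_ge0.
apply: le_mul1 => //; first by rewrite !mulr_ge0.
by rewrite -[X in _ <= X]mulr1 ler_pM.
Qed.

Lemma main_sec (hc : complete_abs absv) (k n : nat) : (k <= n)%N ->
  exists (E : nat -> K) (I : K),
    (forall j, is_ferm_integral absv p (fun x => qnum q x ^+ j) (E j)) /\
    is_ferm_integral absv p (fun x => qBernstein q k n x / ('C(n, k))%:R) I /\
    cvg_to absv
      (fun M => \sum_(m < M) \sum_(l < (n - k).+1)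
          gbinom K (l%:Z + m%:Z - 1) m * ('C(n - k, l))%:R * (-1) ^+ (l + m)
          * q ^+ l * (q - 1) ^+ m * E (l + m + k)%N)
      I.
Proof.
move=> hkn.
have Eex : forall j, exists E, is_ferm_integral absv p (fun x => qn q x ^+ j) E.
  by move=> j; apply: ferm_exists hc (fmod_exp j bnd_qn fmod_qn).
pose Ef := fun j => proj1_sig (constructive_indefinite_description _ (Eex j)).
have hE : forall j, is_ferm_integral absv p (fun x => qn q x ^+ j) (Ef j).
  by move=> j; rewrite /Ef; case: (constructive_indefinite_description _ _).
have [I hI] : exists I, is_ferm_integral absv p (hf k (n - k)) I.
  apply: ferm_exists hc _.
  exact: (fmod_mul (bnd_exp k bnd_qn) (bnd_exp (n - k) bnd_vv)
           (fmod_exp k bnd_qn fmod_qn) (fmod_exp (n - k) bnd_vv fmod_vv)).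
exists Ef, I; split.
  by move=> j; apply: (int_ext (hE j)) => x; rewrite qnumE.
split.
  apply: (int_ext hI) => x.
  have hC : ('C(n, k))%:R != 0 :> K by apply: natr_neq0; rewrite bin_gt0.
  rewrite /qBernstein qnumE qnum1mE /hf; move: (qn q x ^+ k) (vv x ^+ (n - k)) => a b; field; exact: hC.
have hT : forall M, is_ferm_integral absv p (gM k (n - k) M)
    (\sum_(m < M) \sum_(l < (n - k).+1) coef (n - k) l m * Ef (l + m + k)%N).
  move=> M; rewrite /gM.
  apply: (@int_sum (fun m x => \sum_(l < (n - k).+1) coef (n - k) l m * qn q x ^+ (l + m + k))
    (fun m => \sum_(l < (n - k).+1) coef (n - k) l m * Ef (l + m + k)%N)) => m.
  apply: (@int_sum (fun l x => coef (n - k) l m * qn q x ^+ (l + m + k))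
    (fun l => coef (n - k) l m * Ef (l + m + k)%N)) => l.
  apply: int_scale; exact: hE.
have key : forall M, absv (I - \sum_(m < M) \sum_(l < (n - k).+1) coef (n - k) l m * Ef (l + m + k)%N)
    <= absv (1 - q) ^+ M.
  move=> M; apply: int_bound (int_sub hI (hT M)) _ _.
    by rewrite exprn_ge0 ?abs_ge0.
  by move=> x; apply: pointwise.
move=> eps e0.
have [N hN] := pow_small (abs_ge0 (1 - q)) t_lt1 e0.
exists N => M hM; rewrite absB; apply: le_lt_trans (key M) _.
apply: le_lt_trans hN; rewrite ler_wiXn2l ?abs_ge0 ?ltW ?t_lt1 //.
Qed.

End Main.

Theorem mainTheorem6 (R : realType) (K : fieldType) (absv : K -> R) (p : nat)
  (q : K) (k n : nat) :
  prime p -> odd p ->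
  nonarch_abs p absv -> complete_abs absv ->
  absv (1 - q) < powR (p%:R) (- ((p.-1)%:R)^-1) ->
  (k <= n)%N ->
  exists (E : nat -> K) (I : K),
    (forall j, is_ferm_integral absv p (fun x => qnum q x ^+ j) (E j)) /\
    is_ferm_integral absv p (fun x => qBernstein q k n x / ('C(n, k))%:R) I /\
    cvg_to absv
      (fun M => \sum_(m < M) \sum_(l < (n - k).+1)
          gbinom K (l%:Z + m%:Z - 1) m * ('C(n - k, l))%:R * (-1) ^+ (l + m)
          * q ^+ l * (q - 1) ^+ m * E (l + m + k)%N)
      I.
Proof.
move=> pp po ha hc hq hkn.
have p1 : (p.-1 != 0)%N by rewrite -lt0n -subn1 subn_gt0 prime_gt1.
have ht : absv (1 - q) ^+ p.-1 < (p%:R)^-1.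
  have h0 : 0 <= absv (1 - q) by case: ha => h _ _ _ _; apply: h.
  have := ltrXn2r p.-1 h0 hq; rewrite p1 => h; apply: lt_le_trans h _.
  rewrite -powR_mulrn ?powR_ge0 // -powRrM mulNr mulVf ?powR_inv1 ?ler0n //.
  by rewrite pnatr_eq0.
exact: (main_sec pp ha ht po hc hkn).
Qed.
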